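(* Let $r\ge4$. Let $\alpha>0$ be sufficiently small in terms of $r$, and let $\delta>0$ be sufficiently small in terms of $\alpha$. Let $\mathcal C$ be a nonempty collection of balanced cuts and $H$ a graph on $V=[n]$. If $H$ is rigid (with respect to $\mathcal C$), then there are distinct $(\mathcal C,H)$-components $S_1,\dots,S_{r-1}$ each of size greater than $n/r$.
   Context: A cut is an ordered partition $\Pi=(A_1,\dots,A_{r-1})$ of $V$. It is balanced if each block has size strictly between $(1-\delta)n/(r-1)$ and $(1+\delta)n/(r-1)$. $\mathrm{ext}(\Pi)$ is the set of pairs meeting two distinct blocks, and $|\Pi_H|=|H\cap\mathrm{ext}(\Pi)|$. $b(\mathcal C,H)=\max\{|\Pi_H|:\Pi\in\mathcal C\}$ and $\max(\mathcal C,H)=\{\Pi\in\mathcal C:|\Pi_H|=b(\mathcal C,H)\}$. Write $x\equiv y$ if $x$ and $y$ lie in the same block of $\Pi$ for every $\Pi\in\max(\mathcal C,H)$. The equivalence classes of $\equiv$ are the $(\mathcal C,H)$-components. $H$ is rigid if the number of unordered pairs $\{x,y\}$ ($x\ne y$) with $x\equiv y$ is at least $(1-\alpha)n^2/(2(r-1))$. *)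

(* Defs.v *)
From HB Require Import structures.
From mathcomp Require Import all_boot all_order all_algebra.
Set Implicit Arguments. Unset Strict Implicit. Unset Printing Implicit Defensive.
Import Order.TTheory GRing.Theory Num.Theory.

(* Vertex set V = [n] is 'I_n.  A cut (ordered partition into k = r-1 blocks)
   is a map assigning to each vertex the index of its block. *)
Definition cut (n k : nat) := {ffun 'I_n -> 'I_k}.

Definition simple_graph (n : nat) (H : rel 'I_n) :=
  symmetric H /\ irreflexive H.

Definition balanced (n k : nat) (d : rat) (P : cut n k) : Prop :=
  forall i : 'I_k,
    ((1 - d) * n%:R / k%:R < (#|[set x | P x == i]|)%:R :> rat)%R /\
    ((#|[set x | P x == i]|)%:R < (1 + d) * n%:R / k%:R :> rat)%R.

Definition cutval (n k : nat) (H : rel 'I_n) (P : cut n k) : nat :=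
  #|[set p : 'I_n * 'I_n | [&& (p.1 < p.2)%N, H p.1 p.2 & P p.1 != P p.2]]|.

Definition bval (n k : nat) (C : {set cut n k}) (H : rel 'I_n) : nat :=
  \max_(P in C) cutval H P.

Definition maxcuts (n k : nat) (C : {set cut n k}) (H : rel 'I_n) : {set cut n k} :=
  [set P in C | cutval H P == bval C H].

Definition cequiv (n k : nat) (C : {set cut n k}) (H : rel 'I_n) (x y : 'I_n) : bool :=
  [forall P in maxcuts C H, P x == P y].

Definition component (n k : nat) (C : {set cut n k}) (H : rel 'I_n) (x : 'I_n)
  : {set 'I_n} := [set y | cequiv C H x y].

Definition is_component (n k : nat) (C : {set cut n k}) (H : rel 'I_n)
  (S : {set 'I_n}) : Prop := exists x, S = component C H x.

Definition rigid (n k : nat) (a : rat) (C : {set cut n k}) (H : rel 'I_n) : Prop :=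
  ((1 - a) * (n%:R ^+ 2) / (2 * k%:R) <=
   (#|[set p : 'I_n * 'I_n | (p.1 < p.2)%N && cequiv C H p.1 p.2]|)%:R :> rat)%R.

(* Main.v *)
Require Import Defs.
From HB Require Import structures.
From mathcomp Require Import all_boot all_order all_algebra.
From mathcomp Require Import ring lra.
Import Order.TTheory GRing.Theory Num.Theory.

Lemma count2 n (E : rel 'I_n) : symmetric E ->
  (2 * #|[set p : 'I_n * 'I_n | (p.1 < p.2)%N && E p.1 p.2]| <=
   \sum_(x : 'I_n) #|[set y | E x y]|)%N.
Proof.
move=> Es.
set A := [set p : 'I_n * 'I_n | _].
set B := [set p : 'I_n * 'I_n | (p.2 < p.1)%N && E p.1 p.2].
have hB : B = [set (p.2, p.1) | p in A].
  apply/setP => -[x y]; rewrite !inE; apply/idP/imsetP => /=.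
    move=> /andP[h1 h2]; exists (y, x); rewrite // inE /= h1 Es //.
  by move=> [[u v]]; rewrite inE /= => /andP[h1 h2] [-> ->]; rewrite h1 Es.
have cB : #|B| = #|A|.
  rewrite hB card_imset // => -[u v] [u' v'] /= [-> ->] //.
have dAB : A :&: B = set0.
  apply/setP => -[x y]; rewrite !inE /=.
  apply/negbTE/negP => /andP[/andP[h _] /andP[h' _]].
  by move: (ltn_trans h h'); rewrite ltnn.
have sub : A :|: B \subset [set p : 'I_n * 'I_n | E p.1 p.2].
  by apply/subsetP => -[x y]; rewrite !inE /= => /orP[/andP[_ ->]|/andP[_ ->]].
have := subset_leq_card sub; rewrite cardsU dAB cards0 subn0 cB => h; rewrite mul2n -addnn.
apply: (leq_trans h).
rewrite -sum1_card (big_mkcond (fun p => p \in _)) /=.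
have -> : \sum_(p : 'I_n * 'I_n) (if p \in [set p : 'I_n * 'I_n | E p.1 p.2] then 1 else 0)%N
   = \sum_(x : 'I_n) \sum_(y : 'I_n) (if E x y then 1 else 0)%N.
  by rewrite pair_big /=; apply: eq_bigr => -[x y] _; rewrite inE.
apply: leq_sum => x _.
rewrite -sum1_card (big_mkcond (fun y => y \in _)) /=.
by apply: leq_sum => y _; rewrite !inE.
Qed.

Local Open Scope ring_scope.
Lemma keyc (c e N b a d : rat) : 0 < c -> 0 < e -> e - c = - (c * e) -> c * e <= 1 ->
  0 < N -> 0 < a -> a < c * e / 2 -> 0 < d -> d < c * e / 4 ->
  (1 - d) * c * N < b ->
  (1 - a) * c * N * N <= b * N * e + (N - b) * ((1 + d) * c * N) -> False.
Proof.
move=> c0 e0 ec ce1 N0 a0 ha d0 hd hb h0.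
have h : (1 - a) * c * N <= b * e + (N - b) * (1 + d) * c.
  rewrite -(ler_pM2r N0).
  have -> : (b * e + (N - b) * (1 + d) * c) * N = b * N * e + (N - b) * ((1 + d) * c * N) by ring.
  exact h0.
have h2 : 0 <= b * (e - c - d * c) + N * c * (d + a) by lra.
have hneg : e - c - d * c < 0 by nra.
have h3 : b * (e - c - d * c) < (1 - d) * c * N * (e - c - d * c).
  by rewrite ltr_nM2r.
have dc0 : 0 < d * c by apply: mulr_gt0.
have h4 : 0 < (1 - d) * (c * e + d * c) - (d + a) by nra.
have h5 : 0 < N * c * ((1 - d) * (c * e + d * c) - (d + a)) by apply: mulr_gt0; [nra|lra].
have E : (1 - d) * c * N * (e - c - d * c) + N * c * (d + a) =
   - (N * c * ((1 - d) * (c * e + d * c) - (d + a))).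
  have ->: e - c - d * c = - (c * e + d * c) by rewrite ec; ring.
  ring.
lra.
Qed.

Theorem mainTheorem15 :
  forall r : nat, (4 <= r)%N ->
  exists a0 : rat, (0 < a0)%R /\
  forall a : rat, (0 < a)%R -> (a < a0)%R ->
  exists d0 : rat, (0 < d0)%R /\
  forall d : rat, (0 < d)%R -> (d < d0)%R ->
  forall (n : nat) (C : {set cut n r.-1}) (H : rel 'I_n),
    C != set0 ->
    (forall P, P \in C -> balanced d P) ->
    simple_graph H ->
    rigid a C H ->
    exists S : 'I_(r.-1) -> {set 'I_n},
      injective S /\
      forall i, is_component C H (S i) /\
                (n%:R / r%:R < (#|S i|)%:R :> rat)%R.
Proof.
move=> r hr.
have [k rk] : exists k, r = k.+1 by exists r.-1; rewrite prednK // (ltn_trans _ hr).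
subst r; rewrite /= in hr *.
have hk3 : (3 <= k)%N by [].
have k0 : (0 : rat) < k%:R by rewrite ltr0n (leq_trans _ hk3).
have r0 : (0 : rat) < k.+1%:R by rewrite ltr0n.
set c : rat := k%:R^-1.
set e : rat := k.+1%:R^-1.
have c0 : 0 < c by rewrite invr_gt0.
have e0 : 0 < e by rewrite invr_gt0.
have ce0 : 0 < c * e by apply: mulr_gt0.
have ec : e - c = - (c * e).
  rewrite /c /e -natr1; field; rewrite -?natr1; apply/andP; split; lra.
have c1 : c <= 1 by rewrite /c invf_le1 // ler1n (leq_trans _ hk3).
have e1 : e <= 1 by rewrite /e invf_le1 // ler1n.
have ce1 : c * e <= 1 by rewrite mulr_ile1 // ltW.
exists (c * e / 2); split; first by lra.
move=> a a0 ha.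
exists (c * e / 4); split; first by lra.
move=> d d0 hd n C H Cn0 Cbal Hs Hrig.
have cC : (0 < #|C|)%N by rewrite card_gt0.
have [P PC Pmax] := eq_bigmax_cond (cutval H) cC.
have PM : P \in maxcuts C H by rewrite inE PC /bval Pmax eqxx.
have eqvP : forall x y, cequiv C H x y -> P x = P y.
  by move=> x y /forallP /(_ P); rewrite PM => /eqP.
have eqv_refl : forall x, cequiv C H x x by move=> x; apply/forallP => Q; apply/implyP.
have eqv_sym' : forall x y, cequiv C H x y -> cequiv C H y x.
  move=> x y /forallP h; apply/forallP => Q; apply/implyP => hQ.
  by have := h Q; rewrite hQ /= eq_sym.
have eqv_sym : symmetric (cequiv C H).
  by move=> x y; apply/idP/idP; apply: eqv_sym'.
have Pbal := Cbal P PC.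
have i0 : 'I_k := Ordinal (leq_trans (isT : (0 < 3)%N) hk3).
set N : rat := n%:R.
have N0 : 0 < N.
  rewrite ltr0n lt0n; apply/negP => /eqP n0.
  have := (Pbal i0).1.
  have : (#|[set x | P x == i0]| <= n)%N by apply: leq_trans (max_card _) _; rewrite card_ord.
  have hn : N = 0 by rewrite /N n0.
  move/leq_trans/(_ (eq_leq n0)); rewrite leqn0 => /eqP ->.
  by rewrite -/N hn mulr0 mul0r ltxx.
have ex : forall i : 'I_k, exists x, (P x == i) && (N / k.+1%:R < #|component C H x|%:R).
  move=> i; case: (boolP [exists x, (P x == i) && (N / k.+1%:R < #|component C H x|%:R)]).
    by move/existsP.
  move/existsPn => hno; exfalso.
  have hcomp : forall x, (#|component C H x| <= #|[set y | P y == P x]|)%N.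
    move=> x; apply: subset_leq_card; apply/subsetP => y; rewrite !inE => /eqvP ->.
    by rewrite eqxx.
  set b : rat := #|[set x | P x == i]|%:R.
  set M : rat := (1 + d) * c * N.
  have hg : forall x, (#|component C H x|%:R : rat) <= (if P x == i then N * e else M).
    move=> x; case: eqP => hx.
      by have := hno x; rewrite hx eqxx /= -leNgt.
    apply: (@le_trans _ _ (#|[set y | P y == P x]|%:R)); first by rewrite ler_nat hcomp.
    apply: ltW; apply: lt_le_trans (Pbal (P x)).2 _.
    by rewrite /M /N /c mulrAC lexx.
  have hsum : \sum_x (#|component C H x|%:R : rat) <= \sum_x (if P x == i then N * e else M).
    by apply: ler_sum => x _; apply: hg.
  have hsumE : \sum_x (if P x == i then N * e else M) = b * (N * e) + (N - b) * M.
    rewrite (bigID (fun x => P x == i)) /=.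
    rewrite (eq_bigr (fun _ => N * e)); last by move=> x ->.
    rewrite [X in _ + X](eq_bigr (fun _ => M)); last by move=> x /negPf ->.
    rewrite !sumr_const.
    have hc := cardC [pred x | P x == i].
    rewrite card_ord in hc.
    have hb' : #|[pred x | P x == i]| = #|[set x | P x == i]|.
      by apply: eq_card => x; rewrite !inE.
    have -> : (N - b) = #|[predC [pred x | P x == i]]|%:R.
      have hN : N = (#|[pred x | P x == i]| + #|[predC [pred x | P x == i]]|)%:R by rewrite hc.
      by rewrite hN /b -hb' natrD addrAC subrr add0r.
    rewrite /b -hb' !mulr_natl.
    by congr (_ + _); congr (_ *+ _); apply: eq_card => x; rewrite !inE.
  have h2 := @count2 n _ eqv_sym.
  have h2r : 2 * (#|[set p : 'I_n * 'I_n | (p.1 < p.2)%N && cequiv C H p.1 p.2]|%:R : rat)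
      <= \sum_x (#|component C H x|%:R : rat).
    by rewrite -natr_sum -(natrM _ 2) ler_nat.
  have hb := (Pbal i).1.
  apply: (@keyc c e N b a d c0 e0 ec ce1 N0 a0 ha d0 hd).
    by apply: le_lt_trans hb; rewrite /N /c mulrAC lexx.
  have step1 : (1 - a) * c * N * N <=
      2 * (#|[set p : 'I_n * 'I_n | (p.1 < p.2)%N && cequiv C H p.1 p.2]|%:R : rat).
    have -> : (1 - a) * c * N * N = 2 * ((1 - a) * (N ^+ 2) / (2 * k%:R)).
      rewrite /c; field; lra.
    by rewrite ler_pM2l //.
  apply: le_trans step1 _; apply: le_trans h2r _; apply: le_trans hsum _.
  by rewrite hsumE /M mulrA lexx.
have [f hf] := fin_all_exists ex.
exists (fun i => component C H (f i)); split.
  move=> i j hij.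
  have : f i \in component C H (f j) by rewrite -hij inE eqv_refl.
  rewrite inE => /eqvP.
  by have /andP[/eqP -> _] := hf i; have /andP[/eqP -> _] := hf j.
move=> i; split; first by exists (f i).
by have /andP[_ ->] := hf i.
Qed.
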